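(* Let $\nu$ be a Lévy measure concentrated on $\mathbb{Z}^n\setminus\{\mathbf{0}\}$ with $\int_{\mathbb{R}^n}\min(1,\|\mathbf{y}\|)\nu(d\mathbf{y})<\infty$, let $N$ be a homogeneous Poisson random measure on $\mathbb{R}^n\times[0,1]\times\mathbb{R}$ with intensity $\nu(d\mathbf{y})\,dx\,ds$, and $\mathbf{L}=(L^{(1)},\dots,L^{(n)})^\top$, $\mathbf{L}(dx,ds)=\int_{\mathbb{R}^n}\mathbf{y}\,N(d\mathbf{y},dx,ds)$. Fix $i\in\{1,\dots,n\}$ and let $d^{(i)}:(-\infty,0]\to[0,1]$ be continuous with $\int_{-\infty}^0d^{(i)}(s)\,ds<\infty$. Then $$X^{(i)}_{0,t}:=L^{(i)}\big(\{(x,s):s\le0,\ 0\le x\le d^{(i)}(s-t)\}\big)\to0\quad\text{in probability as }t\to\infty.$$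
   Context: $X^{(i)}_{0,t}$ is the contribution, to the $i$-th component $Y^{(i)}_t=L^{(i)}(\{(x,s):s\le t,\ 0\le x\le d^{(i)}(s-t)\})$ of the trawl process, coming from the part of the trawl lying at times $s\le0$. *)

(* Defs.v *)
From HB Require Import structures.
From mathcomp Require Import all_boot all_order all_algebra.
From mathcomp Require Import all_classical all_reals all_analysis.
From mathcomp Require Import measurable_realfun.
Set Implicit Arguments. Unset Strict Implicit. Unset Printing Implicit Defensive.
Import Order.TTheory GRing.Theory Num.Theory.
Import numFieldNormedType.Exports.
Local Open Scope classical_set_scope.
Local Open Scope ring_scope.

(* The state space  R^n x R x R  of the Poisson random measure: a point is
   (y, (x, s)) with y the jump size, x the "height" coordinate and s time. *)
Definition PRMspace (R : realType) (n : nat) := (n.-tuple R * (R * R))%type.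

Definition tnorm (R : realType) (n : nat) (y : n.-tuple R) : R :=
  Num.sqrt (\sum_(j < n) (tnth y j) ^+ 2).

Definition in_Zn_minus0 (R : realType) (n : nat) (y : n.-tuple R) : Prop :=
  (forall j, tnth y j \is a Num.int) /\ (exists j, tnth y j != 0).

Definition levy_measure (R : realType) (n : nat)
    (nu : {measure set (n.-tuple R) -> \bar R}) : Prop :=
  nu [set y | forall j, tnth y j = 0] = 0%E /\
  (\int[nu]_y (Num.min 1 (tnorm y ^+ 2))%:E < +oo)%E.

Definition poisson_weight (R : realType) (r : R) (k : nat) : R :=
  r ^+ k / (k`!)%:R * expR (- r).

Definition poisson_random_measure (R : realType) (dO : measure_display)
    (Omega : measurableType dO) (P : probability Omega R)
    (dE : measure_display) (E : measurableType dE)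
    (mu : set E -> \bar R) (N : Omega -> {measure set E -> \bar R}) : Prop :=
  (forall A, measurable A ->
     measurable_fun [set: Omega] ((fun w => N w A) : Omega -> \bar R)) /\
  (forall A, measurable A -> (mu A < +oo)%E -> forall k : nat,
      P [set w | N w A = (k%:R)%:E] = (poisson_weight (fine (mu A)) k)%:E) /\
  (forall A, measurable A -> mu A = +oo%E ->
      P [set w | N w A = +oo%E] = 1%E) /\
  (forall (m : nat) (A : 'I_m -> set E) (B : 'I_m -> set (\bar R)),
      (forall j, measurable (A j)) ->
      (forall j j', j != j' -> A j `&` A j' = set0) ->
      (forall j, measurable (B j)) ->
      P (\bigcap_(j in [set: 'I_m]) [set w | B j (N w (A j))]) =
      (\prod_(j < m) fine (P [set w | B j (N w (A j))]))%:E).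

(* Intensity  nu(dy) dx ds  on  R^n x [0,1] x R  (extended by zero outside
   x in [0,1]). *)
Definition prm_intensity (R : realType) (n : nat)
    (nu : {measure set (n.-tuple R) -> \bar R}) : set (PRMspace R n) -> \bar R :=
  fun A => (nu \x ((@lebesgue_measure R) \x (@lebesgue_measure R)))%E
             (A `&` [set z | 0 <= z.2.1 <= 1]).

Definition Lcomp (R : realType) (n : nat) (i : 'I_n)
    (N : {measure set (PRMspace R n) -> \bar R}) (B : set (R * R)) : \bar R :=
  (\int[N]_(z in [set z : PRMspace R n | B z.2]) (tnth z.1 i)%:E)%E.

Definition trawl_past (R : realType) (d : R -> R) (t : R) : set (R * R) :=
  [set p | p.2 <= 0 /\ 0 <= p.1 <= d (p.2 - t)].

Definition X0t (R : realType) (n : nat) (i : 'I_n)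
    (N : {measure set (PRMspace R n) -> \bar R}) (d : R -> R) (t : R) : \bar R :=
  Lcomp i N (trawl_past d t).

(* Main.v *)
Require Import Defs.
From HB Require Import structures.
From mathcomp Require Import all_boot all_order all_algebra.
From mathcomp Require Import all_classical all_reals all_analysis.
From mathcomp Require Import measurable_realfun.
Import Order.TTheory GRing.Theory Num.Theory.
Import numFieldNormedType.Exports.
Local Open Scope classical_set_scope.
Local Open Scope ring_scope.
From mathcomp Require Import lra.
Lemma mle (R : realType) (f g : R * R -> R) :
  measurable_fun setT f -> measurable_fun setT g -> measurable [set p | f p <= g p].
Proof.
move=> mf mg.
have -> : [set p | f p <= g p] = setT `&` (fun p => f p <= g p) @^-1` [set true].
  by apply/seteqP; split => p /=; [move=> ->|case].
exact: (measurable_fun_ler mf mg measurableT).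
Qed.

Lemma mA (R : realType) (d : R -> R) (t : R) :
  {within `]-oo, (0:R)], continuous d} -> 0 <= t -> measurable (trawl_past d t).
Proof.
move=> cd t0.
have md : measurable_fun `]-oo, (0:R)] d.
  exact: subspace_continuous_measurable_fun.
have md' : measurable_fun setT (d \_ `]-oo, (0:R)]) by apply/(measurable_restrictT _ _).1.
have -> : trawl_past d t = [set p | p.2 <= 0] `&` [set p | 0 <= p.1] `&`
   [set p | p.1 <= (d \_ `]-oo, (0:R)]) (p.2 - t)].
  apply/seteqP; split => -[x s] /=; rewrite /trawl_past/=.
    move=> [s0 /andP[x0 xd]]; split; first by split.
    by rewrite patchE mem_set//= in_itv/= subr_le0 (le_trans s0).
  move=> [[s0 x0]]; rewrite patchE ifT; last by apply/mem_set; rewrite /= in_itv/= subr_le0 (le_trans s0).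
  by move=> xd; split => //; apply/andP.
apply: measurableI; first apply: measurableI.
- apply: mle => //; exact: measurable_snd.
- apply: mle => //; exact: measurable_fst.
- apply: mle; first exact: measurable_fst.
  apply: measurableT_comp => //; apply: measurable_funB => //; exact: measurable_snd.
Qed.
Lemma mint (R : realType) : measurable [set r : R | r \is a Num.int].
Proof.
have -> : [set r : R | r \is a Num.int] = \bigcup_(k : int) [set (k%:~R : R)].
  apply/seteqP; split => r /=.
    by move=> /intrP[m ->]; exists m.
  by move=> [m _ ->]; apply/intrP; exists m.
apply: countable_bigcupT_measurable; first exact: countableP.
move=> k; exact: measurable_set1.
Qed.

Lemma mZ (R : realType) (n : nat) : measurable [set y : n.-tuple R | ~ in_Zn_minus0 y].
Proof.
have -> : [set y : n.-tuple R | ~ in_Zn_minus0 y] = ~`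
  ((\bigcap_(j in [set: 'I_n]) ((@tnth n R)^~ j @^-1` [set r | r \is a Num.int])) `&`
  (\bigcup_(j in [set: 'I_n]) ((@tnth n R)^~ j @^-1` [set r | r != 0]))).
  rewrite -[LHS]/(~` [set y | in_Zn_minus0 y]); congr (~` _).
  apply/seteqP; split => y /=.
    by move=> [h [j hj]]; split; [move=> k _; exact: h|exists j].
  by move=> [h [j _ hj]]; split; [move=> k; exact: h|exists j].
apply: measurableC; apply: measurableI.
  apply: fin_bigcap_measurable; first exact: finite_finset.
  move=> j _; rewrite -[X in measurable X]setTI.
  apply: measurable_tnth => //; exact: mint.
apply: fin_bigcup_measurable; first exact: finite_finset.
move=> j _; rewrite -[X in measurable X]setTI.
apply: measurable_tnth => //.
have -> : [set r : R | r != 0] = ~` [set 0] by apply/seteqP; split => r /= /eqP.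
apply: measurableC; exact: measurable_set1.
Qed.
Lemma tnorm_ge (R : realType) (n : nat) (y : n.-tuple R) j : `|tnth y j| <= tnorm y.
Proof.
rewrite /tnorm -sqrtr_sqr ler_sqrt; last by apply: sumr_ge0 => k _; exact: sqr_ge0.
by rewrite (bigD1 j)//= lerDl; apply: sumr_ge0 => k _; exact: sqr_ge0.
Qed.

Lemma tnorm_Zn (R : realType) (n : nat) (y : n.-tuple R) : in_Zn_minus0 y -> 1 <= tnorm y.
Proof.
move=> [hi [j hj]]; apply: le_trans (norm_intr_ge1 (hi j) hj) (@tnorm_ge _ _ y j).
Qed.

Lemma mtnorm (R : realType) (n : nat) : measurable_fun setT (@tnorm R n).
Proof.
apply: measurableT_comp.
  apply: continuous_measurable_fun; exact: sqrt_continuous.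
apply: measurable_sum => j; apply: measurable_funX; exact: measurable_tnth.
Qed.
Lemma nu_fin (R : realType) (n : nat) (nu : {measure set (n.-tuple R) -> \bar R}) :
  nu [set y | ~ in_Zn_minus0 y] = 0%E ->
  (\int[nu]_y (Num.min 1 (tnorm y))%:E < +oo)%E -> (nu setT < +oo)%E.
Proof.
move=> nuZ hint.
pose Z := [set y : n.-tuple R | ~ in_Zn_minus0 y]; change (nu Z = 0%E) in nuZ.
have mZ' : measurable Z := mZ R n.
have mf : measurable_fun setT (fun y : n.-tuple R => (Num.min 1 (tnorm y))%:E).
  apply/measurable_EFinP; apply: measurable_minr => //; exact: mtnorm.
have -> : nu setT = nu (~` Z).
  rewrite -(setUv Z) measureU//.
  - by rewrite -[RHS]add0e; congr (_ + _).
  - exact: measurableC.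
  - by rewrite setICr.
rewrite -[nu _]mul1e -integral_cst; last exact: measurableC.
apply: le_lt_trans hint.
apply: (@le_trans _ _ (\int[nu]_(y in ~` Z) (Num.min 1 (tnorm y))%:E)%E).
  apply: ge0_le_integral.
  + exact: measurableC.
  + by move=> y _; exact: lee01.
  + exact: measurable_cst.
  + by apply: measurable_funS mf => //; exact: measurableC.
  + move=> y /= hy; rewrite lee_fin.
    have h1 : 1 <= tnorm y by apply: tnorm_Zn; exact: contrapT.
    by rewrite le_min lexx h1.
apply: ge0_subset_integral => //.
- exact: measurableC.
- by move=> y _; rewrite lee_fin le_min ler01 sqrtr_ge0.
Qed.
Section shiftm.
Context (R : realType) (t : R).
Definition shiftm (A : set (measurableTypeR R)) : \bar R :=
  lebesgue_measure ((fun s : R => (s - t)%R) @^-1` A).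

Let mphi : measurable_fun setT (fun s : measurableTypeR R => (s - t)%R : measurableTypeR R).
Proof. by apply: measurable_funB. Qed.

Let shiftm0 : shiftm set0 = 0%E.
Proof. by rewrite /shiftm preimage_set0 measure0. Qed.

Let shiftm_ge0 A : (0 <= shiftm A)%E.
Proof. exact: measure_ge0. Qed.

Let shiftm_sigma_additive : semi_sigma_additive shiftm.
Proof.
move=> F mF tF mUF; rewrite /shiftm preimage_bigcup.
apply: measure_semi_sigma_additive.
- by move=> n; rewrite -[X in measurable X]setTI; exact: mphi.
- apply/trivIsetP => /= i j _ _ ij; rewrite -preimage_setI.
  by move/trivIsetP : tF => /(_ _ _ _ _ ij) ->//; rewrite preimage_set0.
- by rewrite -preimage_bigcup -[X in measurable X]setTI; exact: mphi.
Qed.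

HB.instance Definition _ := isMeasure.Build _ _ _
  shiftm shiftm0 shiftm_ge0 shiftm_sigma_additive.

Lemma leb_shift (A : set R) : measurable A ->
  lebesgue_measure ((fun s => (s - t)%R) @^-1` A) = lebesgue_measure A.
Proof.
move=> mA; symmetry.
apply: (@lebesgue_measure_unique R shiftm) => // _ [[a b] _ <-] /=.
rewrite /shiftm.
have -> : (fun s : R => (s - t)%R) @^-1` `]a, b] = `]a + t, b + t]%classic.
  by apply/seteqP; split => s /=; rewrite !in_itv/= ltrBrDr lerBlDr.
rewrite !lebesgue_measure_itv/= !lte_fin ltrD2r.
by case: ifPn => // _; rewrite -!EFinB; congr (_%:E); rewrite opprD addrACA subrr addr0.
Qed.
End shiftm.
Lemma int_shift (R : realType) (t : R) (f : R -> \bar R) (D : set R) :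
  measurable D -> measurable_fun D f -> (forall x, D x -> (0 <= f x)%E) ->
  (\int[@lebesgue_measure R]_(x in (fun s => (s - t)%R) @^-1` D) f (x - t)%R =
   \int[@lebesgue_measure R]_(x in D) f x)%E.
Proof.
move=> mD mf f0.
have mphi : measurable_fun setT (fun s : measurableTypeR R => (s - t)%R : measurableTypeR R).
  by apply: measurable_funB.
rewrite -(ge0_integral_pushforward mphi) //; last by move=> x /set_mem; exact: f0.
apply: eq_measure_integral => A mA _.
have h := @leb_shift R t A mA. first [exact: h | (simpl; exact: h) | (rewrite -h; reflexivity) | (rewrite -{}h; done)].
Qed.
Lemma leb2_At (R : realType) (d : R -> R) (t : R) :
  {within `]-oo, (0:R)], continuous d} -> (forall s, s <= 0 -> 0 <= d s <= 1) ->
  0 <= t ->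
  (((@lebesgue_measure R) \x (@lebesgue_measure R)) (trawl_past d t) =
   \int[@lebesgue_measure R]_(u in `]-oo, (- t)%R]) (d u)%:E)%E.
Proof.
move=> cd d01 t0.
have nt : - t <= 0 by rewrite oppr_le0.
have mAt := @mA R d t cd t0.
rewrite /product_measure1 -indic_fubini_tonelli_FE// indic_fubini_tonelli//.
rewrite indic_fubini_tonelli_GE//.
have md : measurable_fun `]-oo, (0:R)] d.
  exact: subspace_continuous_measurable_fun.
rewrite -(@int_shift R t (fun u => (d u)%:E)); last 3 first.
- exact: measurable_itv.
- apply/measurable_EFinP; apply: measurable_funS md => //.
  move=> u /=; rewrite !in_itv/= => hu; exact: le_trans hu nt.
- move=> u; rewrite /mkset/= in_itv/= => hu; rewrite lee_fin.
  by have /andP[] := d01 u (le_trans hu nt).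
have -> : (fun s : R => (s - t)%R) @^-1` `]-oo, (- t)%R] = `]-oo, (0:R)]%classic.
  by apply/seteqP; split => s /=; rewrite !in_itv/= lerBlDr addNr.
rewrite [RHS]integral_mkcond; apply: eq_integral => s _ /=.
rewrite patchE; case: ifPn => hs.
- have hs' : s <= 0 by move: hs; rewrite inE /= in_itv.
  have hst : s - t <= 0 by rewrite subr_le0 (le_trans hs').
  have /andP[d0 _] := d01 _ hst.
  rewrite (_ : ysection _ s = `[0, d (s - t)]%classic); last first.
    apply/seteqP; split => x /=; rewrite /ysection /= in_itv/=.
      by move=> /set_mem [] /=.
    by move=> h; apply/mem_set; split.
  rewrite lebesgue_measure_itv/= lte_fin; case: ltP => h.
    by rewrite oppr0 adde0.
  by congr (_%:E); apply/le_anti; rewrite h d0.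
- rewrite (_ : ysection _ s = set0); first by rewrite measure0.
    apply/seteqP; split => x //=; rewrite /ysection /= => /set_mem [] /= hs'.
  by move: hs; rewrite notin_setE /= in_itv/= hs'.
Qed.
Lemma tail_small (R : realType) (d : R -> R) :
  {within `]-oo, (0:R)], continuous d} -> (forall s, s <= 0 -> 0 <= d s <= 1) ->
  (\int[@lebesgue_measure R]_(s in `]-oo, (0:R)%R]) (d s)%:E < +oo)%E ->
  forall e : R, 0 < e -> exists k : nat,
    (\int[@lebesgue_measure R]_(u in `]-oo, (- k%:R)%R]) (d u)%:E <= e%:E)%E.
Proof.
move=> cd d01 dint e e0.
have md : measurable_fun `]-oo, (0:R)] d.
  exact: subspace_continuous_measurable_fun.
have mdE : measurable_fun `]-oo, (0:R)] (fun s => (d s)%:E) by apply/measurable_EFinP.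
have d0 : forall s, `]-oo, (0:R)]%classic s -> (0 <= (d s)%:E)%E.
  move=> s; rewrite /= in_itv/= lee_fin => hs; by have /andP[] := d01 s hs.
pose F := fun k : nat => `]- (k%:R : R), 0]%classic.
have FS : forall k, F k `<=` `]-oo, (0:R)]%classic.
  by move=> k x; rewrite /F /= !in_itv/= => /andP[].
have UF : \bigcup_k F k = `]-oo, (0:R)]%classic.
  apply/seteqP; split => x.
    by move=> [k _]; exact: FS.
  rewrite /= in_itv/= => x0; exists (Num.Def.archi_bound (- x)) => //.
  rewrite /F /= in_itv/= x0 andbT ltrNl.
  by apply: archi_boundP; rewrite oppr_ge0.
have h := @ge0_nondecreasing_set_cvg_integral _ (measurableTypeR R) R F (fun s => (d s)%:E)
  (@lebesgue_measure R).
rewrite UF in h.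
have I0 : (0 <= \int[@lebesgue_measure R]_(s in `]-oo, (0:R)%R]) (d s)%:E)%E.
  by apply: integral_ge0 => s hs; exact: d0.
have Ifin : (\int[@lebesgue_measure R]_(s in `]-oo, (0:R)%R]) (d s)%:E)%E \is a fin_num.
  by rewrite ge0_fin_numE.
have h1 : {homo F : n m / (n <= m)%N >-> (n <= m)%O}.
  move=> m k mk; apply/subsetPset => x; rewrite /F /= !in_itv/= => /andP[+ ->].
  by rewrite andbT; apply: le_lt_trans; rewrite lerN2 ler_nat.
have h2 : forall k, measurable (F k) by move=> k; exact: measurable_itv.
have h3 : forall k, measurable_fun (F k) (fun s : measurableTypeR R => (d s)%:E).
  move=> k; apply: (measurable_funS _ (FS k) mdE); exact: measurable_itv.
have {h}h := h h1 h2 h3 (fun k x Fx => d0 x (FS k x Fx)).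
rewrite -(fineK Ifin) in h; move/fine_cvgP: h => [_ h].
have := h; move/cvgrPdist_le => /(_ e e0) [N _ hN].
exists N.
have := hN N (leqnn N); rewrite /= => hNe.
set I := (\int[@lebesgue_measure R]_(s in `]-oo, (0:R)%R]) (d s)%:E)%E in Ifin hNe *.
set J := (\int[@lebesgue_measure R]_(x in F N) (d x)%:E)%E in hNe *.
set K := (\int[@lebesgue_measure R]_(u in `]-oo, (- N%:R)%R]) (d u)%:E)%E.
have hU : I = (K + J)%E.
  rewrite /I /K /J -integral_setU //.
  - congr (integral _ _ _); apply/seteqP; split => x.
      rewrite /= in_itv/= => x0.
      have [xN|xN] := leP x (- N%:R); [by left; rewrite /= in_itv/= xN|right].
      by rewrite /F /= in_itv/= xN x0.
    move=> [|]; rewrite /F /= !in_itv/=.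
      by move=> /le_trans; apply; rewrite oppr_le0.
    by case/andP.
  - exact: measurable_itv.
  - apply: (measurable_funS (measurable_itv _) _ mdE).
    move=> x [|]; rewrite /F /= !in_itv/=.
      by move=> /le_trans; apply; rewrite oppr_le0.
    by case/andP.
  - rewrite disj_set2E; apply/eqP/seteqP; split => x //=.
    by rewrite /F /= !in_itv/= => -[xN /andP[/lt_le_trans /(_ xN)]]; rewrite ltxx.
have Kfin : K \is a fin_num.
  by move: Ifin; rewrite hU fin_numD => /andP[].
have Jfin : J \is a fin_num.
  by move: Ifin; rewrite hU fin_numD => /andP[].
rewrite -(fineK Kfin) lee_fin.
have -> : fine K = fine I - fine J by rewrite hU (fineD Kfin Jfin) addrK.
by apply: le_trans hNe; apply: ler_norm.
Qed.
Definition Dset (R : realType) (n : nat) (d : R -> R) (t : R) : set (PRMspace R n) :=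
  [set z | trawl_past d t z.2].
Arguments Dset {R} n d t.

Lemma mDset (R : realType) (n : nat) (d : R -> R) (t : R) :
  {within `]-oo, (0:R)], continuous d} -> 0 <= t -> measurable (Dset n d t).
Proof.
move=> cd t0; rewrite /Dset.
rewrite -[X in measurable X]setTI.
exact: (@measurable_snd _ _ (n.-tuple R) (R * R)%type measurableT _ (@mA R d t cd t0)).
Qed.

Lemma mcoord (R : realType) (n : nat) (i : 'I_n) :
  measurable_fun setT (fun z : PRMspace R n => (tnth z.1 i)%:E).
Proof.
apply/measurable_EFinP.
exact: (measurableT_comp (@measurable_tnth _ _ n i) measurable_fst).
Qed.

Lemma X0t_null (R : realType) (n : nat) (i : 'I_n) (d : R -> R) (t : R)
  (M : {measure set (PRMspace R n) -> \bar R}) :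
  {within `]-oo, (0:R)], continuous d} -> 0 <= t ->
  M (Dset n d t) = 0%E -> X0t i M d t = 0%E.
Proof.
move=> cd t0 M0; rewrite /X0t /Lcomp.
apply: null_set_integral => //; first exact: mDset.
apply: measurable_funS (mcoord R n i) => //.
Qed.
Lemma mEvent (R : realType) (n : nat) (dO : measure_display) (Omega : measurableType dO)
  (N : Omega -> {measure set (PRMspace R n) -> \bar R}) (i : 'I_n) (d : R -> R) (t eps : R) :
  (forall A, measurable A -> measurable_fun setT (fun w => N w A)) ->
  {within `]-oo, (0:R)], continuous d} -> 0 <= t ->
  measurable [set w | (eps%:E < `| X0t i (N w) d t |)%E].
Proof.
move=> hN cd t0.
pose f := fun z : PRMspace R n => (tnth z.1 i)%:E.
have mD := @mDset R n d t cd t0.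
have mfD : measurable_fun setT (f \_ (Dset n d t)).
  apply/(measurable_restrictT _ _).1 => //.
  exact: measurable_funS (mcoord R n i).
have eqX : (fun w => X0t i (N w) d t) =
  ((fun w => \int[N w]_z ((f \_ (Dset n d t))^\+ z)) \-
  (fun w => \int[N w]_z ((f \_ (Dset n d t))^\- z)))%E.
  apply/funext => w; rewrite /X0t /Lcomp integral_mkcond integralE //.
have mX : measurable_fun setT (fun w => X0t i (N w) d t).
  rewrite eqX; apply: emeasurable_funB.
  - apply: (measurable_fun_integral_kernel hN); last exact: measurable_funepos.
    by move=> z; exact: funepos_ge0.
  - apply: (measurable_fun_integral_kernel hN); last exact: measurable_funeneg.
    by move=> z; exact: funeneg_ge0.
have -> : [set w | (eps%:E < `| X0t i (N w) d t |)%E] =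
  setT `&` ((fun x => `|x|%E) \o (fun w => X0t i (N w) d t)) @^-1` `]eps%:E, +oo[%classic.
  by apply/seteqP; split => w /=; rewrite in_itv/= andbT; [move=> h; split | case].
have mY : measurable_fun setT ((fun x => `|x|%E) \o (fun w => X0t i (N w) d t)).
  apply: measurableT_comp mX; exact: abse_measurable.
exact: (mY measurableT _ (emeasurable_itv _)).
Qed.
Lemma intensity_eq (R : realType) (n : nat) (nu : {measure set (n.-tuple R) -> \bar R})
  (d : R -> R) (t : R) :
  {within `]-oo, (0:R)], continuous d} -> (forall s, s <= 0 -> 0 <= d s <= 1) ->
  0 <= t ->
  prm_intensity nu (Dset n d t) =
  (nu setT * \int[@lebesgue_measure R]_(u in `]-oo, (- t)%R]) (d u)%:E)%E.
Proof.
move=> cd d01 t0.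
rewrite /prm_intensity.
have -> : Dset n d t `&` [set z | 0 <= z.2.1 <= 1] = Dset n d t.
  apply/setIidl => -[y [x s]] /= [s0 /andP[x0 xd]].
  rewrite x0 /=; apply: le_trans xd _.
  by have /andP[] := d01 (s - t) (ltac:(by rewrite subr_le0 (le_trans s0))).
rewrite /product_measure1.
rewrite -(@leb2_At R d t cd d01 t0).
transitivity (\int[nu]_(y in setT)
  (cst (((@lebesgue_measure R) \x (@lebesgue_measure R))%E (trawl_past d t))) y)%E.
  apply: eq_integral => y _ /=; rewrite (_ : xsection _ y = trawl_past d t)//.
  by apply/seteqP; split => p; rewrite /xsection /= inE.
by rewrite (@integral_cst _ _ R nu setT measurableT) muleC.
Qed.
Theorem proposition6 (R : realType) (n : nat)
  (nu : {measure set (n.-tuple R) -> \bar R})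
  (dO : measure_display) (Omega : measurableType dO) (P : probability Omega R)
  (N : Omega -> {measure set (PRMspace R n) -> \bar R})
  (i : 'I_n) (d : R -> R) :
  levy_measure nu ->
  nu [set y | ~ in_Zn_minus0 y] = 0%E ->
  (\int[nu]_y (Num.min 1 (tnorm y))%:E < +oo)%E ->
  poisson_random_measure P (prm_intensity nu) N ->
  {within `]-oo, (0:R)], continuous d} ->
  (forall s, s <= 0 -> 0 <= d s <= 1) ->
  (\int[@lebesgue_measure R]_(s in `]-oo, (0:R)%R]) (d s)%:E < +oo)%E ->
  forall eps : R, 0 < eps ->
    P [set w | (eps%:E < `| X0t i (N w) d t |)%E] @[t --> +oo%R] --> 0%E.
Proof.
move=> _ hZ hint [hmeas [hpois _]] cd d01 dint eps eps0.
have nuT := @nu_fin R n nu hZ hint.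
have nuT0 : (0 <= nu setT)%E := measure_ge0 _ _.
have nufin : nu setT \is a fin_num by rewrite ge0_fin_numE.
pose c := fine (nu setT).
have c0 : 0 <= c := fine_ge0 nuT0.
have md : measurable_fun `]-oo, (0:R)] d.
  exact: subspace_continuous_measurable_fun.
have mdE : measurable_fun `]-oo, (0:R)] (fun s => (d s)%:E) by apply/measurable_EFinP.
pose Tl t := (\int[@lebesgue_measure R]_(u in `]-oo, (- t)%R]) (d u)%:E)%E.
have Tlmono : forall t t', 0 <= t -> t <= t' -> (Tl t' <= Tl t)%E.
  move=> t t' t0 tt'; apply: ge0_subset_integral.
  - exact: measurable_itv.
  - exact: measurable_itv.
  - apply: (measurable_funS (measurable_itv _) _ mdE).
    by move=> u /=; rewrite !in_itv/= => /le_trans; apply; rewrite oppr_le0.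
  - move=> u /=; rewrite in_itv/= => hu; rewrite lee_fin.
    have nt : - t <= 0 by rewrite oppr_le0.
    by have /andP[] := d01 u (le_trans hu nt).
  - by move=> u /=; rewrite !in_itv/= => /le_trans; apply; rewrite lerN2.
have Tl0 : forall t, 0 <= t -> (0 <= Tl t)%E.
  move=> t t0; apply: integral_ge0 => u /=; rewrite in_itv/= => hu; rewrite lee_fin.
  have nt : - t <= 0 by rewrite oppr_le0.
  by have /andP[] := d01 u (le_trans hu nt).
have Tlfin : forall t, 0 <= t -> Tl t \is a fin_num.
  move=> t t0; rewrite ge0_fin_numE ?Tl0//.
  apply: le_lt_trans (Tlmono 0 t (lexx 0) t0) _.
  by rewrite /Tl oppr0.
have key : forall t, 0 <= t ->
    (P [set w | (eps%:E < `| X0t i (N w) d t |)%E] <= (c * fine (Tl t))%:E)%E.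
  move=> t t0.
  have mD := @mDset R n d t cd t0.
  have hm := @intensity_eq R n nu d t cd d01 t0.
  have mfin' : prm_intensity nu (Dset n d t) \is a fin_num.
    by rewrite hm fin_numM// Tlfin.
  have mfin : (prm_intensity nu (Dset n d t) < +oo)%E.
    by move: mfin' => /fin_numPlt/andP[].
  have hP0 := hpois _ mD mfin 0%N.
  pose Z := [set w | N w (Dset n d t) = ((0%N)%:R)%:E].
  have mZ : measurable Z.
    have := hmeas _ mD measurableT [set ((0%N)%:R)%:E] (emeasurable_set1 _).
    by rewrite setTI.
  have mE := @mEvent R n dO Omega N i d t eps hmeas cd t0.
  have sub : [set w | (eps%:E < `| X0t i (N w) d t |)%E] `<=` ~` Z.
    move=> w /= hw hz; move: hw; rewrite (@X0t_null R n i d t (N w) cd t0 hz) abse0 lte_fin.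
    by rewrite ltNge (ltW eps0).
  have hle : (P [set w | (eps%:E < `| X0t i (N w) d t |)%E] <= P (~` Z))%E.
    by apply: le_measure; rewrite ?inE//; exact: measurableC.
  have hC : P (~` Z) = (1 - P Z)%E := probability_setC P mZ.
  apply: le_trans hle _; rewrite hC.
  rewrite hP0 /poisson_weight expr0 fact0 div1r invr1 mul1r.
  rewrite -EFinB lee_fin.
  have -> : c * fine (Tl t) = fine (prm_intensity nu (Dset n d t)).
    by rewrite hm fineM// Tlfin.
  have := expR_ge1Dx (- fine (prm_intensity nu (Dset n d t))).
  lra.
have Pfin : forall t, 0 <= t ->
    P [set w | (eps%:E < `| X0t i (N w) d t |)%E] \is a fin_num.
  move=> t t0; rewrite ge0_fin_numE ?measure_ge0//.
  apply: le_lt_trans (probability_le1 _ _) _; last exact: ltey.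
  exact: (@mEvent R n dO Omega N i d t eps hmeas cd t0).
apply/fine_cvgP; split.
  exists 0; split; first exact: num_real.
  by move=> t /ltW t0; exact: Pfin.
apply/cvgrPdist_le => e e0.
have e'0 : 0 < e / (c + 1) by rewrite divr_gt0// ltr_wpDl.
have [k hk] := @tail_small R d cd d01 dint _ e'0.
exists (k%:R); split; first exact: num_real.
move=> t kt.
have t0 : 0 <= t by apply: le_trans (ltW kt).
rewrite /= sub0r normrN ger0_norm; last by apply: fine_ge0; exact: measure_ge0.
have h1 := key t t0.
have h2 : fine (P [set w | (eps%:E < `| X0t i (N w) d t |)%E]) <= c * fine (Tl t).
  by rewrite -lee_fin fineK ?Pfin.
apply: le_trans h2 _.
have h3 : fine (Tl t) <= e / (c + 1).
  rewrite -lee_fin fineK ?Tlfin//.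
  apply: le_trans (Tlmono _ _ (ler0n _ k) (ltW kt)) _.
  exact: hk.
apply: le_trans (ler_wpM2l c0 h3) _.
rewrite mulrA ler_pdivrMr; last by rewrite ltr_wpDl.
by rewrite mulrDr mulr1 [c * e]mulrC lerDl ltW.
Qed.
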